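(* Let $k\ge2$ and $n\ge1$. In the position-randomized auction setting described in the context, fix an initial bid sequence $a_1,\dots,a_n$ of ${\mathcal A}$ and a common initial bid sequence $b_1,\dots,b_n$ of the disadvantaged bidders such that $a_i\ne b_j$ for all $i,j$. Let $W_1$ be the expected number of objects ${\mathcal A}$ wins when ${\mathcal A}$ uses the uniform distribution on permutations and the disadvantaged bidders use some (arbitrary, common) distribution on permutations; $W_2$ be the expected number of objects ${\mathcal A}$ wins when ${\mathcal A}$ does not permute his initial sequence (bids $a_i$ on object $i$) and the disadvantaged bidders use the uniform distribution; $W_3$ be the expected number of objects ${\mathcal A}$ wins when ${\mathcal A}$ uses an arbitrary given distribution on permutations and the disadvantaged bidders use the uniform distribution. Then $W_1\ge W_2=W_3$.
   Context: Auction model: there are $k$ bidders, one adversary ${\mathcal A}$ and $k-1$ disadvantaged bidders, and $n$ objects auctioned simultaneously. Each object is won by the highest bidder on it; if $m$ bidders tie for the highest bid, each wins with probability $1/m$. A position-randomized bidding algorithm: a bidder chooses an initial sequence $x_1,\dots,x_n$ of positive reals (with $\sum x_j\le1$) and a probability distribution on permutations $\sigma$ of $\{1,\dots,n\}$; he draws $\sigma$ and bids $x_j$ on object $\sigma(j)$. All disadvantaged bidders use the same initial sequence and the same permutation distribution, drawing their permutations independently of each other; ${\mathcal A}$'s permutation is drawn independently of theirs. *)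

(* Defs.v *)
From mathcomp Require Import all_boot all_order all_algebra all_fingroup.
Set Implicit Arguments. Unset Strict Implicit. Unset Printing Implicit Defensive.
Import Order.TTheory GRing.Theory Num.Theory.
Local Open Scope ring_scope.

Section Auction.
Variable R : realFieldType.

Definition is_perm_distr (n : nat) (p : {perm 'I_n} -> R) : Prop :=
  (forall s, 0 <= p s) /\ \sum_(s : {perm 'I_n}) p s = 1.

Definition unif_perm (n : nat) : {perm 'I_n} -> R := fun _ => 1 / (n`!)%:R.

Definition id_perm_distr (n : nat) : {perm 'I_n} -> R :=
  fun s => if s == 1%g then 1 else 0.

(* A bidder with initial sequence x and permutation s bids x j on object s j,
   i.e. bids x (s^-1 o) on object o. *)
Definition bid (n : nat) (x : 'I_n -> R) (s : {perm 'I_n}) (o : 'I_n) : R :=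
  x ((s^-1)%g o).

(* probability that the adversary, bidding bA, wins an object against the
   other bids bs (ties among m highest bidders broken uniformly, 1/m each) *)
Definition adv_win_prob (m : nat) (bA : R) (bs : 'I_m -> R) : R :=
  if [forall i, bs i <= bA]
  then 1 / (1 + #|[set i | bs i == bA]|)%:R
  else 0.

(* Expected number of objects won by the adversary, with k bidders in total
   (the adversary and k-1 disadvantaged ones), adversary initial sequence a
   with permutation distribution pA, disadvantaged common sequence b with
   common permutation distribution pD, permutations drawn independently. *)
Definition expected_wins (n k : nat) (a b : 'I_n -> R)
    (pA pD : {perm 'I_n} -> R) : R :=
  \sum_(sA : {perm 'I_n}) \sum_(t : {ffun 'I_(k.-1) -> {perm 'I_n}})
     pA sA * (\prod_(i < k.-1) pD (t i)) *
     \sum_(o : 'I_n) adv_win_prob (bid a sA o) (fun i => bid b (t i) o).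

End Auction.

(* Main.v *)
Require Import Defs.
From mathcomp Require Import all_boot all_order all_algebra all_fingroup.
From mathcomp Require Import ring lra.
Set Implicit Arguments. Unset Strict Implicit.
Import Order.TTheory GRing.Theory Num.Theory.
Local Open Scope ring_scope.

Section H.
Variable R : realFieldType.

Definition ind (x y : R) : R := if x < y then 1 else 0.

Lemma ind_ge0 x y : 0 <= ind x y.
Proof. by rewrite /ind; case: ifP. Qed.

Lemma win_prod m (bA : R) (bs : 'I_m -> R) :
  (forall i, bs i != bA) -> adv_win_prob bA bs = \prod_i ind (bs i) bA.
Proof.
move=> hne; rewrite /adv_win_prob; case: forallP => [hle|hn].
  have -> : [set i | bs i == bA] = set0.
    by apply/setP => i; rewrite !inE (negbTE (hne i)).
  rewrite cards0 addn0 divr1; apply/esym/big1 => i _.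
  by rewrite /ind lt_neqAle hne hle.
have [i hi] : exists i, ~~ (bs i <= bA).
  by apply/existsP; rewrite -negb_forall; apply/forallP.
rewrite (bigD1 i) //= /ind ifF ?mul0r //.
by apply/negbTE; apply: contra hi => /ltW.
Qed.

Lemma count_perm n (o : 'I_n) (phi : 'I_n -> R) :
  n%:R * \sum_(s : {perm 'I_n}) phi ((s^-1)%g o) = n`!%:R * \sum_j phi j.
Proof.
have H j : \sum_(s : {perm 'I_n}) phi ((s^-1)%g o) = \sum_(s : {perm 'I_n}) phi ((s^-1)%g j).
  rewrite (reindex_inj (mulIg (tperm o j))) /=.
  apply: eq_bigr => s _; by rewrite invgM tpermV permM tpermL.
transitivity (\sum_(j : 'I_n) \sum_(s : {perm 'I_n}) phi ((s^-1)%g j)).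
  under [RHS]eq_bigr => j _ do rewrite -H.
  by rewrite sumr_const card_ord mulr_natl.
rewrite exchange_big /=.
transitivity (\sum_(s : {perm 'I_n}) \sum_j phi j).
  apply: eq_bigr => s _.
  by rewrite (reindex_inj (@perm_inj _ s)) /=; apply: eq_bigr => j _; rewrite permK.
by rewrite sumr_const card_Sn mulr_natl.
Qed.

Lemma jensen n (y : 'I_n -> R) m : (forall i, 0 <= y i) ->
  (\sum_i y i) ^+ m * n%:R <= n%:R ^+ m * \sum_i y i ^+ m.
Proof.
move=> hy; elim: m => [|m IH].
  by rewrite !expr0 !mul1r sumr_const card_ord.
have cheb : (\sum_i y i) * (\sum_i y i ^+ m) <= n%:R * \sum_i y i ^+ m.+1.
  have : 0 <= \sum_i \sum_j (y i - y j) * (y i ^+ m - y j ^+ m).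
    apply: sumr_ge0 => i _; apply: sumr_ge0 => j _.
    have [hij|hij] := leP (y i) (y j).
      rewrite -mulrNN !opprB mulr_ge0 // subr_ge0 //.
      by apply: lerXn2r; rewrite ?nnegrE ?hy.
    rewrite mulr_ge0 // subr_ge0; first exact: ltW.
    by apply: lerXn2r; rewrite ?nnegrE ?hy ?ltW.
  have E1 : \sum_i \sum_j (y i * y i ^+ m - y i * y j ^+ m) =
     n%:R * \sum_i y i ^+ m.+1 - (\sum_i y i) * (\sum_i y i ^+ m).
    transitivity (\sum_i (y i ^+ m.+1 *+ n - y i * \sum_j y j ^+ m)).
      apply: eq_bigr => i _.
      by rewrite sumrB sumr_const card_ord mulr_sumr exprS.
    by rewrite sumrB sumrMnl mulr_suml mulr_natl.
  have E2 : \sum_i \sum_j (y i - y j) * (y i ^+ m - y j ^+ m) =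
     (\sum_i \sum_j (y i * y i ^+ m - y i * y j ^+ m)) +
     (\sum_i \sum_j (y j * y j ^+ m - y j * y i ^+ m)).
    rewrite -big_split /=; apply: eq_bigr => i _.
    rewrite -big_split /=; apply: eq_bigr => j _.
    ring.
  rewrite E2 [X in _ + X]exchange_big /= E1 -mulr2n pmulrn_lge0 // subr_ge0.
  done.
have S0 : 0 <= \sum_i y i by apply: sumr_ge0.
rewrite exprS -mulrA.
apply: (le_trans (ler_wpM2l S0 IH)).
rewrite mulrCA exprSr -mulrA.
by apply: ler_wpM2l; [apply: exprn_ge0; apply: ler0n | exact: cheb].
Qed.

Lemma expand k n (a b : 'I_n -> R) pA pD : (forall i j, a i != b j) ->
  expected_wins k a b pA pD = \sum_sA pA sA *
    \sum_o (\sum_s pD s * ind (bid b s o) (bid a sA o)) ^+ k.-1.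
Proof.
move=> hab; rewrite /expected_wins; apply: eq_bigr => sA _.
under eq_bigr => t _ do rewrite -mulrA.
rewrite -mulr_sumr; congr (_ * _).
under eq_bigr => t _ do rewrite mulr_sumr.
rewrite exchange_big /=; apply: eq_bigr => o _.
under eq_bigr => t _.
  rewrite win_prod; last by move=> i; rewrite eq_sym hab.
  rewrite -big_split /=.
  over.
rewrite -(bigA_distr_bigA (fun (i : 'I_k.-1) s => pD s * ind (bid b s o) (bid a sA o))) /=.
by rewrite prodr_const card_ord.
Qed.

Lemma sum_reindex n (s : {perm 'I_n}) (F : 'I_n -> R) :
  \sum_o F ((s^-1)%g o) = \sum_o F o.
Proof. by rewrite [RHS](reindex_inj (@perm_inj _ (s^-1)%g)). Qed.

Definition Nb n (b : 'I_n -> R) x := \sum_j ind (b j) x.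

Lemma G_unif n (hn : (1 <= n)%N) (b : 'I_n -> R) o x :
  \sum_s @unif_perm R n s * ind (bid b s o) x = Nb b x / n%:R.
Proof.
have nz : n%:R != 0 :> R by rewrite pnatr_eq0 -lt0n.
have nz' : n`!%:R != 0 :> R by rewrite pnatr_eq0 -lt0n fact_gt0.
have hS := count_perm o (fun j => ind (b j) x).
rewrite /unif_perm /bid -mulr_sumr.
apply: (mulfI nz); rewrite [LHS]mulrCA hS /Nb. field.
by rewrite nz nz'.
Qed.

Lemma E_unif k n (hn : (1 <= n)%N) (a b : 'I_n -> R) p : (forall i j, a i != b j) ->
  expected_wins k a b p (@unif_perm R n) =
  (\sum_s p s) * \sum_j (Nb b (a j) / n%:R) ^+ k.-1.
Proof.
move=> hab; rewrite expand // mulr_suml; apply: eq_bigr => sA _.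
congr (_ * _).
under eq_bigr => o _ do rewrite G_unif //.
by rewrite /bid (sum_reindex sA (fun j => (Nb b (a j) / n%:R) ^+ k.-1)).
Qed.

Lemma W1_ge k n (hn : (1 <= n)%N) (a b : 'I_n -> R) pD : is_perm_distr pD ->
  (forall i j, a i != b j) ->
  \sum_j (Nb b (a j) / n%:R) ^+ k.-1 <= expected_wins k a b (@unif_perm R n) pD.
Proof.
move=> [pD0 pD1] hab; rewrite expand //.
pose G := fun o x => \sum_s pD s * ind (bid b s o) x.
change (\sum_j (Nb b (a j) / n%:R) ^+ k.-1 <=
  \sum_sA @unif_perm R n sA * \sum_o (G o (bid a sA o)) ^+ k.-1).
have npos : 0 < n%:R :> R by rewrite ltr0n.
have nz' : n`!%:R != 0 :> R by rewrite pnatr_eq0 -lt0n fact_gt0.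
have sumG x : \sum_o G o x = Nb b x.
  rewrite /G exchange_big /=.
  under eq_bigr => s _ do rewrite -mulr_sumr /bid (sum_reindex s (fun j => ind (b j) x)).
  by rewrite -mulr_suml pD1 mul1r.
have G0 o x : 0 <= G o x.
  by apply: sumr_ge0 => s _; apply: mulr_ge0; [exact: pD0 | exact: ind_ge0].
have key : n%:R * (\sum_sA @unif_perm R n sA * \sum_o (G o (bid a sA o)) ^+ k.-1)
    = \sum_j \sum_o (G o (a j)) ^+ k.-1.
  rewrite /unif_perm -mulr_sumr exchange_big /= mulrCA mulr_sumr.
  have -> : \sum_o n%:R * \sum_sA (G o (bid a sA o)) ^+ k.-1 =
     \sum_o n`!%:R * \sum_j (G o (a j)) ^+ k.-1.
    by apply: eq_bigr => o _; exact: (count_perm o (fun j => (G o (a j)) ^+ k.-1)).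
  rewrite -mulr_sumr mulrA mul1r mulVf // mul1r.
  by rewrite exchange_big.
rewrite -(ler_pM2l npos) key mulr_sumr; apply: ler_sum => j _.
rewrite -sumG expr_div_n.
have -> : n%:R * ((\sum_o G o (a j)) ^+ k.-1 / n%:R ^+ k.-1) =
    (\sum_o G o (a j)) ^+ k.-1 * n%:R / n%:R ^+ k.-1 by rewrite mulrCA mulrA.
rewrite ler_pdivrMr ?exprn_gt0 // [X in _ <= X]mulrC.
by apply: jensen => o; apply: G0.
Qed.
End H.

Theorem lemma4p1 (R : realFieldType) (k n : nat) (hk : (2 <= k)%N) (hn : (1 <= n)%N)
    (a b : 'I_n -> R)
    (ha_pos : forall i, 0 < a i) (ha_sum : \sum_(i < n) a i <= 1)
    (hb_pos : forall i, 0 < b i) (hb_sum : \sum_(i < n) b i <= 1)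
    (hab : forall i j, a i != b j)
    (pD : {perm 'I_n} -> R) (hpD : is_perm_distr pD)
    (pA : {perm 'I_n} -> R) (hpA : is_perm_distr pA) :
  let W1 := expected_wins k a b (@unif_perm R n) pD in
  let W2 := expected_wins k a b (@id_perm_distr R n) (@unif_perm R n) in
  let W3 := expected_wins k a b pA (@unif_perm R n) in
  W2 <= W1 /\ W2 = W3.
Proof.
move=> W1 W2 W3.
have hid : \sum_s @id_perm_distr R n s = 1.
  rewrite (bigD1 1%g) //= /id_perm_distr eqxx big1 ?addr0 // => s /negbTE ->.
  done.
have e2 : W2 = \sum_j (Nb b (a j) / n%:R) ^+ k.-1.
  by rewrite /W2 E_unif // hid mul1r.
split.
  by rewrite e2; apply: W1_ge.
by rewrite e2 /W3 E_unif // hpA.2 mul1r.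
Qed.
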